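(* Let $p$ be a prime and identify $(\mathbb Z/p\mathbb Z)^\infty=\bigoplus_{n\ge1}\mathbb Z/p\mathbb Z$ with the additive group of the polynomial ring $\mathbb F_p[t]$. Let $N\in\mathbb N$ and suppose there is a set $B\subseteq\mathbb F_p^N$ with $|B|>p^{N/2+1}$ containing no pattern of the form $\{y,\;y+(x_1,x_2,\dots,x_N),\;y+(0,x_1,x_2,\dots,x_{N-1})\}$ with $y\in\mathbb F_p^N$ and $(x_1,\dots,x_N)\ne0$. Then there is a measure-preserving system $(X,\mathcal B,\mu,(T_n)_{n\in\mathbb F_p[t]})$ and a set $A\in\mathcal B$ with $\mu(A)>0$ such that $$\mu(A\cap T_nA\cap T_{tn}A)\le\Big(\frac{p^{N/2+1}}{|B|}\Big)^2\mu(A)^3<\mu(A)^3$$ for all $n\ne0$.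
   Context: $T_{tn}$ denotes the action of the polynomial $tn\in\mathbb F_p[t]$; ''nontrivial pattern'' means $(x_1,\dots,x_N)\neq 0$. *)

(* Defs.v *)
From HB Require Import structures.
From mathcomp Require Import all_boot all_order all_algebra.
From mathcomp Require Import all_classical all_reals all_analysis.
Set Implicit Arguments. Unset Strict Implicit. Unset Printing Implicit Defensive.
Import Order.TTheory GRing.Theory Num.Theory.
Local Open Scope classical_set_scope.
Local Open Scope ring_scope.

Definition shiftr (F : nmodType) (N : nat) (x : 'rV[F]_N) : 'rV[F]_N :=
  \row_(i < N) (if nat_of_ord i is k.+1 then x 0 (insubd i k) else 0).

Definition corner_free (p N : nat) (B : {set 'rV['F_p]_N}) : Prop :=
  forall y x : 'rV['F_p]_N, x != 0 ->
    ~ [/\ y \in B, y + x \in B & y + shiftr x \in B].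

Definition mp_action d (X : measurableType d) (R : realType)
  (mu : probability X R) (G : zmodType) (T : G -> X -> X) : Prop :=
  [/\ (forall g, measurable_fun setT (T g)),
      (forall g A, measurable A -> mu (T g @^-1` A) = mu A),
      T 0 = id
    & forall g h, T (g + h) = T g \o T h].

(* Main.v *)
Require Import Defs.
From HB Require Import structures.
From mathcomp Require Import all_boot all_order all_algebra.
From mathcomp Require Import all_classical all_reals all_analysis.
From mathcomp Require Import measurable_realfun.
From mathcomp Require Import zify ring lra.
Import Order.TTheory GRing.Theory Num.Theory.
Set Implicit Arguments. Unset Strict Implicit. Unset Printing Implicit Defensive.
Local Open Scope ring_scope.

Section Digits.
Variables (p : nat) (pr : prime p).

Definition dg (D t k : nat) : nat := ((t %/ p ^ (D - k)) %% p)%N.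

Definition dcond (n : {poly 'F_p}) (N D t : nat) : bool :=
  [forall j : 'I_(N.+2), \sum_(i < size n) n`_i * (dg D t (i + j))%:R == 0].

Lemma p_gt0 : (0 < p)%N. Proof. exact: prime_gt0. Qed.

Lemma Fp_natI a b : (a%:R : 'F_p) = b%:R -> (a %% p = b %% p)%N.
Proof. by move=> e; have := val_Fp_nat pr a; rewrite e val_Fp_nat. Qed.

Lemma dg_inj (n : {poly 'F_p}) (N : nat) t t' :
  n != 0 ->
  dcond n N ((size n).-1 + N.+1) t -> dcond n N ((size n).-1 + N.+1) t' ->
  (t %/ p ^ N.+2 = t' %/ p ^ N.+2)%N -> t = t'.
Proof.
set D := ((size n).-1 + N.+1)%N.
move=> n0 /forallP ct /forallP ct' e.
set d := (size n).-1.
have sn : size n = d.+1 by rewrite /d prednK // size_poly_gt0.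
suff H : forall m, (m <= N.+2)%N -> (t %/ p ^ (N.+2 - m) = t' %/ p ^ (N.+2 - m))%N.
  by have := H N.+2 (leqnn _); rewrite subnn expn0 !divn1.
elim=> [|m IH] lm; first by rewrite subn0.
have IH' := IH (ltnW lm).
set a := (N.+2 - m.+1)%N.
have ea : (N.+2 - m = a.+1)%N by rewrite /a; clear -lm; lia.
rewrite ea in IH'.
have split x : (x %/ p ^ a = (x %/ p ^ a.+1) * p + (x %/ p ^ a) %% p)%N.
  by rewrite {1}(divn_eq (x %/ p ^ a) p) expnSr divnMA.
rewrite (split t) (split t') IH'; congr (_ + _)%N.
have cm := ct (Ordinal lm); have cm' := ct' (Ordinal lm).
move: cm cm'; rewrite /= sn !big_ord_recr /=.
have Dd : forall i : 'I_d, (dg D t (i + m) = dg D t' (i + m))%N.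
  move=> i; rewrite /dg.
  have -> : (D - (i + m) = a.+1 + (d - i.+1))%N.
    rewrite /D /a -/d; have := ltn_ord i; move: lm; clear; lia.
  by rewrite expnD !divnMA IH'.
rewrite (eq_bigr (fun i : 'I_d => n`_i * (dg D t' (i + m))%:R)); last first.
  by move=> i _; rewrite Dd.
move=> /eqP e1 /eqP e2.
have : n`_d * (dg D t (d + m))%:R = n`_d * (dg D t' (d + m))%:R.
  by apply: (addrI (\sum_(i < d) n`_i * (dg D t' (i + m))%:R)); rewrite e1 e2.
have ld : n`_d != 0.
  by have := n0; rewrite -lead_coef_eq0 lead_coefE sn.
move=> /(mulfI ld) /Fp_natI; rewrite /dg !modn_mod.
have -> : (D - (d + m) = a)%N by rewrite /D /a; move: lm; clear; lia.
by [].
Qed.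

Lemma dg_count (n : {poly 'F_p}) (N : nat) :
  n != 0 ->
  (#|[set t : 'I_(p ^ ((size n).-1 + N.+1).+1).+1 | dcond n N ((size n).-1 + N.+1) t]|
     <= (p ^ (size n).-1).+1)%N.
Proof.
move=> n0; set D := ((size n).-1 + N.+1)%N.
set S := [set t : 'I_(p ^ D.+1).+1 | dcond n N D t].
pose f (t : 'I_(p ^ D.+1).+1) : 'I_(p ^ (size n).-1).+1 := inord (t %/ p ^ N.+2).
have fle (t : 'I_(p ^ D.+1).+1) : (t %/ p ^ N.+2 < (p ^ (size n).-1).+1)%N.
  rewrite ltnS; have := ltn_ord t; rewrite ltnS => tl.
  have -> : (p ^ (size n).-1 = p ^ D.+1 %/ p ^ N.+2)%N.
    by rewrite /D -addnS expnD mulnK // expn_gt0 p_gt0.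
  exact: leq_div2r.
have finj : {in S &, injective f}.
  move=> t t'; rewrite !inE => ct ct' ef.
  have e : (t %/ p ^ N.+2 = t' %/ p ^ N.+2)%N.
    by rewrite -(@inordK (p ^ (size n).-1) (t %/ p ^ N.+2)) ?fle //
      -(@inordK (p ^ (size n).-1) (t' %/ p ^ N.+2)) ?fle // -/(f t) ef.
  apply: val_inj.
  exact: (dg_inj n0 ct ct' e).
rewrite -(card_in_imset finj).
by apply: leq_trans (max_card _) _; rewrite card_ord.
Qed.

End Digits.

Local Open Scope classical_set_scope.
Local Open Scope ring_scope.

Section Real.
Variables (R : realType) (p : nat) (pr : prime p).

Lemma trunc_div (x : R) (m : nat) : (0 < m)%N ->
  Num.trunc (x / m%:R) = (Num.trunc x %/ m)%N.
Proof.
move=> m0; have m0' : 0 < m%:R :> R by rewrite ltr0n.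
have [x0|x0] := leP 0 x; last first.
  rewrite !truncn_floor (lt_geF x0).
  have -> : (0 <= x / m%:R) = false.
    by apply/negbTE; rewrite -ltNge pmulr_llt0 ?invr_gt0.
  by rewrite div0n.
apply: truncn_def; have /andP[l u] := truncn_itv x0.
apply/andP; split.
  rewrite ler_pdivlMr //; apply: le_trans l.
  by rewrite -natrM ler_nat leq_divM.
rewrite ltr_pdivrMr //; apply: lt_le_trans u _.
by rewrite -natrM ler_nat ltn_ceil.
Qed.

Definition digit (r : R) (k : nat) : nat := (Num.trunc ((p ^ k.+1)%:R * r) %% p)%N.

Lemma digitE r k D : (k <= D)%N ->
  digit r k = dg p D (Num.trunc ((p ^ D.+1)%:R * r)) k.
Proof.
move=> kD; rewrite /digit /dg -trunc_div ?expn_gt0 ?prime_gt0 //.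
congr (Num.trunc _ %% p)%N.
have -> : (p ^ D.+1 = p ^ k.+1 * p ^ (D - k))%N by rewrite -expnD; congr (_ ^ _)%N; lia.
rewrite natrM mulrAC mulfK // pnatr_eq0 expn_eq0.
by rewrite (gtn_eqF (prime_gt0 pr)).
Qed.

Definition lam (r : R) (m : {poly 'F_p}) : 'F_p :=
  \sum_(k < size m) m`_k * (digit r k)%:R.

Lemma lamE r (m : {poly 'F_p}) K : (size m <= K)%N ->
  lam r m = \sum_(k < K) m`_k * (digit r k)%:R.
Proof.
move=> sK; rewrite /lam -(subnKC sK) big_split_ord /=.
rewrite [X in _ = _ + X]big1 ?addr0 //.
by move=> i _; rewrite nth_default ?mul0r // leq_addr.
Qed.

Lemma lamD r m1 m2 : lam r (m1 + m2) = lam r m1 + lam r m2.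
Proof.
pose K := maxn (size m1) (size m2).
rewrite (@lamE r (m1 + m2) K) ?(@lamE r m1 K) ?(@lamE r m2 K) ?leq_maxl ?leq_maxr //.
  by rewrite -big_split /=; apply: eq_bigr => i _; rewrite coefD mulrDl.
exact: size_polyD.
Qed.

Lemma lam0 r : lam r 0 = 0.
Proof. by rewrite /lam size_poly0 big_ord0. Qed.

Lemma lamX r (n : {poly 'F_p}) j : lam r ('X^j * n) = \sum_(i < size n) n`_i * (digit r (i + j))%:R.
Proof.
rewrite (@lamE r _ (j + size n)); last first.
  apply: leq_trans (size_polyMleq _ _) _; rewrite size_polyXn /=; lia.
rewrite big_split_ord /= big1 ?add0r; last first.
  by move=> i _; rewrite coefXnM ltn_ord mul0r.
apply: eq_bigr => i _; rewrite coefXnM ltnNge leq_addr /= addKn addnC //.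
Qed.

Definition Lam (D : nat) (m : {poly 'F_p}) (t : nat) : 'F_p :=
  \sum_(k < size m) m`_k * (dg p D t k)%:R.

Lemma lam_grid r (m : {poly 'F_p}) D : (size m <= D.+1)%N ->
  lam r m = Lam D m (Num.trunc ((p ^ D.+1)%:R * r)).
Proof.
move=> sD; apply: eq_bigr => k _; rewrite (@digitE r k D) //.
by have := ltn_ord k; move: sD; clear; lia.
Qed.

End Real.


Section Grid.
Variable R : realType.

Lemma trunc_set_meas (t : nat) : measurable [set x : R | Num.trunc x = t].
Proof.
case: t => [|t].
  have -> : [set x : R | Num.trunc x = 0%N] = `]-oo, 1[%classic.
    apply/seteqP; split => x /=; rewrite in_itv /=.
      move=> tx; have [x0|x0] := leP 0 x; last by apply: lt_trans x0 _.
      by rewrite -(truncn_lt_nat 1 x0) tx.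
    move=> x1; have [x0|x0] := leP 0 x.
      by apply/eqP; rewrite -leqn0 -ltnS truncn_lt_nat.
    by rewrite truncn_floor (lt_geF x0).
  exact: measurable_itv.
have -> : [set x : R | Num.trunc x = t.+1] = `[t.+1%:R, t.+2%:R[%classic.
  apply/seteqP; split => x /=; rewrite in_itv /=.
    move=> tx; have [x0|x0] := leP 0 x.
      by rewrite -truncn_eq // tx.
    by move: tx; rewrite truncn_floor (lt_geF x0).
  move=> /andP[l u]; have x0 : 0 <= x by apply: le_trans l.
  by apply/eqP; rewrite truncn_eq // l u.
exact: measurable_itv.
Qed.

Lemma grid_meas (P : nat) (g : nat -> bool) :
  measurable [set r : R | g (Num.trunc (P%:R * r))].
Proof.
have -> : [set r : R | g (Num.trunc (P%:R * r))] =
  \bigcup_(t in [set t | g t]) ( *%R P%:R @^-1` [set x : R | Num.trunc x = t]).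
  apply/seteqP; split => r /=.
    by move=> gr; exists (Num.trunc (P%:R * r)).
  by move=> [t gt /= ->].
apply: bigcup_measurable => t _.
rewrite -[X in measurable X]setTI.
exact: (measurable_realfun.mulrl_measurable P%:R measurableT (trunc_set_meas t)).
Qed.

End Grid.


Definition Xt (R : realType) (p N : nat) := (R * 'rV['F_p]_(1 + N))%type.
HB.instance Definition _ (R : realType) p N := Choice.copy (Xt R p N) (R * _)%type.
HB.instance Definition _ (R : realType) p N := isPointed.Build (Xt R p N) (0, 0).

Definition Xmeas (R : realType) p N (S : set (Xt R p N)) : Prop :=
  forall y, measurable [set r : R | S (r, y)].

Lemma Xmeas0 (R : realType) p N : Xmeas (set0 : set (Xt R p N)).
Proof. by move=> y; rewrite [X in measurable X](_ : _ = set0). Qed.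

Lemma XmeasC (R : realType) p N (S : set (Xt R p N)) : Xmeas S -> Xmeas (~` S).
Proof.
move=> mS y; rewrite [X in measurable X](_ : _ = ~` [set r : R | S (r, y)]) //.
exact: measurableC.
Qed.

Lemma Xmeas_bigcup (R : realType) p N (G : (set (Xt R p N))^nat) :
  (forall i, Xmeas (G i)) -> Xmeas (\bigcup_i G i).
Proof.
move=> mG y.
rewrite [X in measurable X](_ : _ = \bigcup_i [set r : R | G i (r, y)]).
  by apply: bigcupT_measurable => i; apply: mG.
by apply/seteqP; split => r /= [i _ Gi]; exists i.
Qed.

HB.instance Definition _ (R : realType) p N :=
  @isMeasurable.Build default_measure_display (Xt R p N) (@Xmeas R p N)
    (@Xmeas0 R p N) (@XmeasC R p N) (@Xmeas_bigcup R p N).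

Section Meas.
Variables (R : realType) (p N : nat).
Local Notation X := (Xt R p N).
Local Notation F := 'rV['F_p]_(1 + N).

Local Notation nu := (uniform_prob (@ltr01 R)).
Definition wt : R := (#|{: F}|%:R)^-1.

Lemma wt_ge0 : 0 <= wt. Proof. by rewrite invr_ge0. Qed.

Definition mu0 (S : set X) : \bar R :=
  \sum_(y : F) (wt%:E * nu [set r | S (r, y)])%E.

Lemma mu0_0 : mu0 set0 = 0%E.
Proof.
rewrite /mu0 big1 // => y _.
rewrite [X in nu X](_ : _ = set0) ?measure0 ?mule0 //.
Qed.

Lemma mu0_ge0 S : (0 <= mu0 S)%E.
Proof.
by apply: sume_ge0 => y _; apply: mule_ge0; rewrite ?lee_fin ?wt_ge0.
Qed.

Lemma mu0_sigma_additive : semi_sigma_additive mu0.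
Proof.
move=> G mG tG mUG.
rewrite [X in _ --> X](_ : _ = \sum_(k <oo) mu0 (G k))%E.
  by apply: is_cvg_ereal_nneg_natsum => k _; exact: mu0_ge0.
rewrite /mu0 nneseries_sum; last first.
  by move=> y j _; apply: mule_ge0; rewrite ?lee_fin ?wt_ge0.
apply: eq_bigr => y _; rewrite nneseriesZl //.
congr (_ * _)%E.
rewrite [X in nu X](_ : _ = \bigcup_k [set r : R | G k (r, y)]); last first.
  by apply/seteqP; split => r /= [i _ Gi]; exists i.
apply: measure_semi_bigcup.
- by move=> i; exact: mG.
- apply/trivIsetP => i j _ _ ij.
  have := (proj1 trivIsetP tG) i j I I ij.
  move=> e; apply/seteqP; split => r // [a b].
  by have : (G i `&` G j) (r, y) by []; rewrite e.
- by apply: bigcupT_measurable => k; apply: mG.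
Qed.

End Meas.

HB.instance Definition _ (R : realType) p N := isMeasure.Build _ _ _ (@mu0 R p N)
  (@mu0_0 R p N) (@mu0_ge0 R p N) (@mu0_sigma_additive R p N).

Lemma mu0_setT (R : realType) p N : @mu0 R p N setT = 1%E.
Proof.
rewrite /mu0 (eq_bigr (fun _ => (wt R p N)%:E)); last first.
  move=> y _; rewrite [X in uniform_prob _ X](_ : _ = setT) ?probability_setT ?mule1 //.
rewrite sumEFin sumr_const /wt.
congr (_%:E); rewrite (@eq_card _ xpredT {: 'rV['F_p]_(1 + N)}) // -[_^-1 *+ _]mulr_natr mulVf //.
rewrite pnatr_eq0 -lt0n; apply/card_gt0P; by exists 0.
Qed.

HB.instance Definition _ (R : realType) p N :=
  Measure_isProbability.Build _ _ _ (@mu0 R p N) (@mu0_setT R p N).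

Check (fun (R : realType) p N => (@mu0 R p N : probability (Xt R p N) R)).


Section Action.
Variables (R : realType) (p N : nat) (pr : prime p).
Local Notation X := (Xt R p N).
Local Notation F := 'rV['F_p]_(1 + N).
Local Notation nu := (uniform_prob (@ltr01 R)).

Definition Lv (r : R) (n : {poly 'F_p}) : F :=
  \row_(i < 1 + N) lam r ('X^(N - i) * n).

Lemma LvD r g h : Lv r (g + h) = Lv r g + Lv r h.
Proof. by apply/rowP => i; rewrite !mxE mulrDr lamD. Qed.

Lemma Lv0 r : Lv r 0 = 0.
Proof. by apply/rowP => i; rewrite !mxE mulr0 lam0. Qed.

Lemma size_XnM (n : {poly 'F_p}) j : (size ('X^j * n)%R <= size n + j)%N.
Proof.
apply: (leq_trans (size_polyMleq _ _)); rewrite size_polyXn /=; lia.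
Qed.

Lemma Lv_grid (n : {poly 'F_p}) D r : (size n + N <= D)%N ->
  Lv r n = \row_(i < 1 + N) Lam D ('X^(N - i) * n) (Num.trunc ((p ^ D.+1)%:R * r)).
Proof.
move=> sD; apply/rowP => i; rewrite !mxE (@lam_grid R p pr r _ D) //.
apply: (leq_trans (size_XnM _ _)); move: sD; clear; lia.
Qed.

Lemma Lv_meas2 (n m : {poly 'F_p}) (Q : F -> F -> bool) :
  measurable [set r : R | Q (Lv r n) (Lv r m)].
Proof.
pose D := (size n + size m + N)%N.
pose g := fun t => Q (\row_(i < 1 + N) Lam D ('X^(N - i) * n) t)
                          (\row_(i < 1 + N) Lam D ('X^(N - i) * m) t).
have -> : [set r : R | Q (Lv r n) (Lv r m)] =
  [set r : R | g (Num.trunc ((p ^ D.+1)%:R * r))].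
  apply/seteqP; split => r /=; rewrite /g -!Lv_grid //; rewrite /D; lia.
exact: (grid_meas (p ^ D.+1) g).
Qed.

Definition Tact (n : {poly 'F_p}) (x : X) : X := (x.1, x.2 + Lv x.1 n).

Lemma meas_shift (E : F -> set R) (c : R -> F) :
  (forall y, measurable (E y)) -> (forall z, measurable [set r | c r = z]) ->
  forall y, measurable [set r | E (y + c r) r].
Proof.
move=> mE mc y.
have -> : [set r | E (y + c r) r] = \bigcup_(z in [set: F]) ([set r | c r = z] `&` E (y + z)).
  apply/seteqP; split => r /=.
    by move=> Er; exists (c r).
  by move=> [z _ [/= <-]].
apply: fin_bigcup_measurable; first exact: finite_finset.
by move=> z _; apply: measurableI.
Qed.

Lemma Lv_eq_meas n z : measurable [set r : R | Lv r n = z].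
Proof.
have -> : [set r : R | Lv r n = z] = [set r : R | (fun a b => a == z) (Lv r n) (Lv r n)].
  by apply/seteqP; split => r /= /eqP.
exact: (Lv_meas2 n n (fun a b => a == z)).
Qed.

Lemma Tact_meas n : measurable_fun setT (Tact n).
Proof.
move=> _ S mS; change (Xmeas (setT `&` Tact n @^-1` S)) => y.
rewrite [X in measurable X](_ : _ = [set r | (fun y r => S (r, y)) (y + Lv r n) r]).
  apply: (meas_shift (E := fun y r => S (r, y))); last exact: Lv_eq_meas. by move=> z; apply: (mS : Xmeas S).
by apply/seteqP; split => r /=; [case|].
Qed.

Lemma nu_indic (E : set R) : measurable E -> nu E = (\int[nu]_x (\1_E x)%:E)%E.
Proof. by move=> mE; rewrite integral_indic // setIT. Qed.

Lemma mindic (E : set R) : measurable E ->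
  measurable_fun setT (fun x => ((\1_E x)%:E : \bar R)).
Proof.
move=> mE; apply/measurable_realfun.measurable_EFinP.
exact: measurable_realfun.measurable_indic.
Qed.

Lemma sum_nu_shift (E : F -> set R) (c : R -> F) :
  (forall y, measurable (E y)) -> (forall z, measurable [set r | c r = z]) ->
  \sum_(y : F) nu [set r | E (y + c r) r] = \sum_(y : F) nu (E y).
Proof.
move=> mE mc.
have ms := meas_shift mE mc.
rewrite (eq_bigr (fun y => \int[nu]_x (\1_[set r | E (y + c r) r] x)%:E)%E); last first.
  by move=> y _; rewrite nu_indic.
rewrite [RHS](eq_bigr (fun y => \int[nu]_x (\1_(E y) x)%:E)%E); last first.
  by move=> y _; rewrite nu_indic.
rewrite -(@ge0_integral_sum _ _ _ nu setT measurableT _ (fun y x => (\1_[set r | E (y + c r) r] x)%:E)) //; last first.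
  by move=> y; apply: mindic.
rewrite -(@ge0_integral_sum _ _ _ nu setT measurableT _ (fun y x => (\1_(E y) x)%:E)) //; last first.
  by move=> y; apply: mindic.
apply: eq_integral => x _.
rewrite [RHS](reindex_inj (addIr (c x))) /=.
by apply: eq_bigr => y _; rewrite !indicE.
Qed.

End Action.


Section Bad.
Variables (R : realType) (p N : nat) (pr : prime p).
Local Notation nu := (uniform_prob (@ltr01 R)).

Lemma nuE (U : set R) : measurable U ->
  nu U = lebesgue_measure (U `&` `[0, 1]).
Proof.
move=> mU; rewrite /uniform_prob integral_uniform_pdf.
rewrite (eq_integral (cst 1%E)); last first.
  move=> x; rewrite inE => -[_ /=]; rewrite in_itv /= /uniform_pdf => ->.
  by rewrite subr0 invr1.
by rewrite integral_cst ?mul1e //; apply: measurableI => //; exact: measurable_itv.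
Qed.

Definition Bad (n : {poly 'F_p}) : set R :=
  [set r | forall j, (j <= N.+1)%N -> lam r ('X^j * n) = 0].

Lemma BadE (n : {poly 'F_p}) : n != 0 ->
  Bad n = [set r | dcond n N ((size n).-1 + N.+1)
                     (Num.trunc ((p ^ ((size n).-1 + N.+1).+1)%:R * r))].
Proof.
move=> n0; set D := ((size n).-1 + N.+1)%N.
have sn : size n = ((size n).-1).+1 by rewrite prednK // size_poly_gt0.
have key (r : R) j : (j <= N.+1)%N -> lam r ('X^j * n) =
   \sum_(i < size n) n`_i * (dg p D (Num.trunc ((p ^ D.+1)%:R * r)) (i + j))%:R.
  move=> jN; rewrite lamX //; apply: eq_bigr => i _; rewrite (@digitE R p pr r _ D) //.
  have := ltn_ord i; rewrite {2}sn /D; move: jN; clear; lia.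
apply/seteqP; split => r /=.
  move=> H; apply/forallP => j; apply/eqP; rewrite -key; last by rewrite -ltnS.
  by apply: H; rewrite -ltnS.
move=> /forallP H j jN; rewrite key //.
by have /eqP := H (Ordinal (jN : (j < N.+2)%N)).
Qed.

Lemma count_real (S : nat) (g : nat -> bool) :
  \sum_(k < S) ((g k)%:R : R) = #|[set t : 'I_S | g t]%SET|%:R.
Proof.
rewrite -sum1_card natr_sum [RHS]big_mkcond /=; apply: eq_bigr => k _.
by rewrite finset.inE; case: (g k).
Qed.

Lemma bad_bound (n : {poly 'F_p}) : n != 0 ->
  (nu (Bad n) <= ((p ^ N)%:R^-1)%:E)%E.
Proof.
move=> n0; set d := (size n).-1; set D := (d + N.+1)%N; set P := (p ^ D.+1)%N.
have p0 := prime_gt0 pr.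
have P0 : (0 < P)%N by rewrite expn_gt0 p0.
have P0r : 0 < P%:R :> R by rewrite ltr0n.
set g := fun t => dcond n N D t.
have BE : Bad n = [set r | g (Num.trunc (P%:R * r))] by rewrite BadE.
have mB : measurable (Bad n) by rewrite BE; exact: (grid_meas P g).
rewrite nuE //.
pose G (k : nat) : set R := if g k then `[k%:R / P%:R, k.+1%:R / P%:R]%classic else set0.
have mG k : measurable (G k) by rewrite /G; case: (g k) => //; exact: measurable_itv.
have sub : Bad n `&` `[0, 1] `<=` \big[setU/set0]_(k < P.+1) G k.
  move=> r []; rewrite BE /= in_itv /= => Br /andP[r0 r1].
  have Pr0 : 0 <= P%:R * r by rewrite mulr_ge0 // ltW.
  set t := Num.trunc (P%:R * r) in Br.
  have tP : (t < P.+1)%N.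
    rewrite truncn_lt_nat //; apply: (le_lt_trans (y := P%:R)); last by rewrite ltr_nat.
    by rewrite -{2}[P%:R]mulr1 ler_wpM2l // ltW.
  rewrite -bigcup_mkord; exists t => //=.
  have /andP[l u] := truncn_itv Pr0.
  rewrite /G Br /= in_itv /=; apply/andP; split.
    by rewrite ler_pdivrMr // mulrC.
  by rewrite ler_pdivlMr // mulrC ltW.
have := @content_subadditive _ _ _ lebesgue_measure (Bad n `&` `[0, 1]) G P.+1.
move=> /(_ (fun k _ => mG k)) /(_ (measurableI _ _ mB (measurable_itv _))) /(_ sub).
move=> H; apply: (le_trans H).
rewrite (eq_bigr (fun k : 'I_P.+1 => ((g k)%:R * P%:R^-1)%:E)); last first.
  move=> k _; rewrite /G; case: (g k); last by rewrite measure0 mul0r.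
  have := lebesgue_measure_itv `[k%:R / P%:R, k.+1%:R / P%:R]; move=> /= ->.
  rewrite lte_fin ltr_pM2r ?invr_gt0 // ltr_nat ltnSn.
  by rewrite -EFinB -mulrBl -natr1 addrAC subrr add0r !mul1r.
rewrite sumEFin -mulr_suml count_real lee_fin.
have cnt := dg_count pr N n0.
rewrite -/d -/D -/P in cnt.
have : (#|[set t : 'I_P.+1 | g t]%SET|%:R : R) <= (p ^ d).+1%:R by rewrite ler_nat.
move=> c; rewrite ler_pdivrMr // mulrC.
apply: (le_trans c); rewrite ler_pdivlMr ?ltr0n ?expn_gt0 ?p0 // -natrM ler_nat.
have -> : P = (p ^ N * (p ^ d * p ^ 2))%N.
  by rewrite /P /D -!expnD; congr (_ ^ _)%N; clear; lia.
rewrite mulnC leq_pmul2l ?expn_gt0 ?p0 //.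
have p2 : (2 <= p)%N by exact: prime_gt1.
have pd : (1 <= p ^ d)%N by rewrite expn_gt0 p0.
have p4 : (4 <= p ^ 2)%N.
  by rewrite -[4%N]/(2 ^ 2)%N leq_exp2r.
move: pd p4; generalize (p ^ d)%N (p ^ 2)%N; clear; nia.
Qed.

End Bad.


Section Corner.
Variables (R : realType) (p N : nat) (pr : prime p).
Local Notation F := 'rV['F_p]_(1 + N).

Definition Aset (B : {set 'rV['F_p]_N}) : {set F} :=
  [set row_mx (0 : 'rV['F_p]_1) b | b in B]%SET.

Lemma LvE (r : R) (n : {poly 'F_p}) (i : 'I_(1 + N)) : Lv N r n 0 i = lam r ('X^(N - i) * n).
Proof. by rewrite /Lv mxE. Qed.

Lemma XXn (n : {poly 'F_p}) m : 'X^m * ('X * n) = 'X^(m.+1) * n.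
Proof. by rewrite mulrA -exprSr. Qed.

Lemma shiftrN (u : 'rV['F_p]_N) : shiftr (- u) = - shiftr u.
Proof. by apply/rowP => k; rewrite !mxE; case: (nat_of_ord k) => [|k']; rewrite ?oppr0 ?mxE. Qed.

Lemma CL (B : {set 'rV['F_p]_N}) (cf : corner_free B) (r : R) (n : {poly 'F_p}) y :
  y \in Aset B -> y - Lv N r n \in Aset B -> y - Lv N r ('X * n) \in Aset B ->
  forall j, (j <= N.+1)%N -> lam r ('X^j * n) = 0.
Proof.
move=> /imsetP[b Bb ->] /imsetP[b1 Bb1 e1] /imsetP[b2 Bb2 e2].
set a := Lv N r n in e1; set a' := Lv N r ('X * n) in e2.
have ea : a = row_mx 0 (b - b1).
  have -> : a = row_mx 0 b - (row_mx 0 b - a) by rewrite opprB addrCA subrr addr0.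
  by rewrite e1 opp_row_mx add_row_mx oppr0 addr0.
have ea' : a' = row_mx 0 (b - b2).
  have -> : a' = row_mx 0 b - (row_mx 0 b - a') by rewrite opprB addrCA subrr addr0.
  by rewrite e2 opp_row_mx add_row_mx oppr0 addr0.
set u := b - b1 in ea.
have a0 : a 0 (lshift N ord0) = 0 by rewrite ea row_mxEl mxE.
have aS (k : 'I_N) : a 0 (rshift 1 k) = u 0 k by rewrite ea row_mxEr.
have a'0 : a' 0 (lshift N ord0) = 0 by rewrite ea' row_mxEl mxE.
have eb2 : b - b2 = shiftr u.
  apply/rowP => k; have := ea'; move/(congr1 (fun M : F => M 0 (rshift 1 k))).
  rewrite row_mxEr => <-; rewrite /a' LvE /= XXn.
  rewrite mxE; case ek: (nat_of_ord k) => [|k'].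
    move: a0; rewrite /a LvE /= subn0 => <-.
    by congr (lam r ('X^_ * n)); move: (ltn_ord k); rewrite ek; clear; lia.
  have k'N : (k' < N)%N by move: (ltn_ord k); rewrite ek; clear; lia.
  rewrite -aS /a LvE /= insubdK ?inE //.
  by congr (lam r ('X^_ * n)); move: (ltn_ord k); rewrite ek; clear; lia.
have u0 : u = 0.
  apply/eqP; rewrite -oppr_eq0; apply/negPn/negP => nu0.
  apply: (cf b (- u) nu0); split => //.
    by rewrite /u opprB addrCA subrr addr0.
  by rewrite shiftrN -eb2 opprB addrCA subrr addr0.
have az : a = 0 by rewrite ea u0 row_mx0.
move=> j jN; case: (ltnP j N.+1) => jlt.
  have iN : (N - j < 1 + N)%N by clear -jlt; lia.
  have := congr1 (fun M : F => M 0 (Ordinal iN)) az.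
  rewrite /a LvE mxE /= => <-.
  by congr (lam r ('X^_ * n)); clear -jlt; lia.
have -> : j = N.+1 by apply/eqP; rewrite eqn_leq jN jlt.
by move: a'0; rewrite /a' LvE /= subn0 XXn.
Qed.

End Corner.


Lemma sum_in_card (R : realType) (T : finType) (S : {set T}) :
  \sum_(y : T) ((y \in S)%:R : R) = #|S|%:R.
Proof.
rewrite -sum1_card natr_sum [RHS]big_mkcond /=; apply: eq_bigr => y _.
by case: (y \in S).
Qed.

Section Final.
Variables (R : realType) (p N : nat) (pr : prime p) (B : {set 'rV['F_p]_N}).
Variable (cf : corner_free B).
Local Notation F := 'rV['F_p]_(1 + N).
Local Notation X := (Xt R p N).
Local Notation mu := (@mu0 R p N).
Local Notation T := (@Tact R p N).
Local Notation nu := (uniform_prob (@ltr01 R)).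

Definition AA : set X := [set x | x.2 \in Aset B].

Lemma mp : mp_action mu T.
Proof.
split.
- by move=> g; exact: Tact_meas.
- move=> g S mS.
  have E := @sum_nu_shift R p N (fun y r => S (r, y)) (fun r => Lv N r g).
  have := congr1 (fun s => ((wt R p N)%:E * s)%E) (E (fun y => mS y) (fun z => Lv_eq_meas pr g z)).
  rewrite !ge0_sume_distrr; last 2 first.
  + by move=> y _; apply: measure_ge0.
  + by move=> y _; apply: measure_ge0.
  by move=> H; exact: H.
- by apply/funext => -[r y]; rewrite /Tact /= Lv0 addr0.
- by move=> g h; apply/funext => -[r y]; rewrite /Tact /= LvD addrA addrAC.
Qed.

Lemma AA_meas : measurable AA.
Proof.
move=> y; rewrite /AA /=; case: (y \in Aset B).
  by rewrite [X in measurable X](_ : _ = setT) //; apply/seteqP; split => r.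
by rewrite [X in measurable X](_ : _ = set0) //; apply/seteqP; split => r.
Qed.

Lemma card_Aset : #|Aset B| = #|B|.
Proof. by apply: card_imset => b b' /eq_row_mx [_ ->]. Qed.

Lemma muA : mu AA = (wt R p N * #|B|%:R)%:E.
Proof.
rewrite /mu0 /= (eq_bigr (fun y : F => (wt R p N * (y \in Aset B)%:R)%:E)); last first.
  move=> y _; rewrite /AA /=; case: (y \in Aset B).
    rewrite [X in nu X](_ : _ = setT) ?probability_setT ?mule1 //.
    by rewrite mulr1. by apply/seteqP; split => r.
  rewrite [X in nu X](_ : _ = set0) ?measure0 ?mulr0 ?mule0 //.
  by apply/seteqP; split => r.
by rewrite sumEFin -mulr_sumr sum_in_card card_Aset.
Qed.

Lemma secE (n : {poly 'F_p}) y :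
  [set r | (AA `&` T n @` AA `&` T ('X * n) @` AA) (r, y)] =
  [set r | [&& y \in Aset B, y - Lv N r n \in Aset B & y - Lv N r ('X * n) \in Aset B]].
Proof.
apply/seteqP; split => r /=.
  move=> [[Ay [[r1 y1] A1 e1]] [[r2 y2] A2 e2]].
  move: e1 e2; rewrite /Tact /= => -[e1 e1'] [e2 e2'].
  subst r1 r2.
  have -> : y - Lv N r n = y1 by rewrite -e1' addrK.
  have -> : y - Lv N r ('X * n) = y2 by rewrite -e2' addrK.
  by rewrite /AA /= in Ay A1 A2; rewrite Ay A1 A2.
move=> /and3P[Ay A1 A2]; split; first split.
- exact: Ay.
- by exists (r, y - Lv N r n) => //; rewrite /Tact /= subrK.
- by exists (r, y - Lv N r ('X * n)) => //; rewrite /Tact /= subrK.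
Qed.

Lemma Bad_meas (n : {poly 'F_p}) : n != 0 -> measurable (Bad (R:=R) N n).
Proof.
move=> n0; rewrite (BadE R N pr n0).
exact: (grid_meas _ (fun t => dcond n N ((size n).-1 + N.+1) t)).
Qed.

Lemma muI (n : {poly 'F_p}) : n != 0 ->
  (mu (AA `&` T n @` AA `&` T ('X * n) @` AA) <=
     (wt R p N * #|B|%:R * (p ^ N)%:R^-1)%:E)%E.
Proof.
move=> n0; rewrite /mu0 /=.
apply: (@le_trans _ _ (\sum_(y : F) ((wt R p N)%:E * ((y \in Aset B)%:R * (p ^ N)%:R^-1)%:E))%E).
  apply: lee_sum => y _; apply: lee_wpmul2l; first by rewrite lee_fin wt_ge0.
  rewrite secE; case yA: (y \in Aset B); last first.
    rewrite [X in nu X](_ : _ = set0) ?measure0 ?mul0r //.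
    by apply/seteqP; split => r.
  rewrite mul1r; apply: le_trans (bad_bound R N pr n0).
  apply: le_measure; rewrite ?inE.
  - exact: (Lv_meas2 pr n ('X * n) (fun a b => [&& true, y - a \in Aset B & y - b \in Aset B])).
  - exact: Bad_meas.
  - move=> r /= /andP[A1 A2] j jN.
    by apply: (CL cf (y := y)) => //.
rewrite (eq_bigr (fun y : F => (wt R p N * (p ^ N)%:R^-1 * (y \in Aset B)%:R)%:E)); last first.
  by move=> y _; rewrite -EFinM mulrA mulrAC.
by rewrite sumEFin -mulr_sumr sum_in_card card_Aset lee_fin mulrAC.
Qed.

End Final.

Unset Implicit Arguments.

Theorem proposition11p9 (R : realType) (p N : nat) (B : {set 'rV['F_p]_N}) :
  prime p ->
  (p%:R `^ (N%:R / 2 + 1) < (#|B|%:R : R)) ->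
  corner_free B ->
  exists (d : measure_display) (X : measurableType d) (mu : probability X R)
         (T : {poly 'F_p} -> X -> X) (A : set X),
    [/\ mp_action mu T, measurable A, (0 < mu A)%E
      & forall n : {poly 'F_p}, n != 0 ->
          (mu (A `&` (T n @` A) `&` (T ('X * n)%R @` A))
             <= ((p%:R `^ (N%:R / 2 + 1) / (#|B|%:R : R)) ^+ 2)%:E
                * (mu A * mu A * mu A))%E
          /\ (((p%:R `^ (N%:R / 2 + 1) / (#|B|%:R : R)) ^+ 2)%:E
                * (mu A * mu A * mu A) < mu A * mu A * mu A)%E].
Proof.
move=> pr hB cf.
exists default_measure_display, (Xt R p N), (@mu0 R p N), (@Tact R p N), (AA B).
set e := N%:R / 2 + 1.
set c := p%:R `^ e / (#|B|%:R : R).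
have p0 : (0 < p)%N := prime_gt0 pr.
have q0 : 0 < p%:R :> R by rewrite ltr0n.
have b0 : 0 < #|B|%:R :> R by apply: le_lt_trans hB; exact: powR_ge0.
have wtE : wt R p N = (p%:R ^+ (1 + N))^-1.
  by rewrite /wt card_mx card_Fp // mul1n natrX.
have wt0 : 0 < wt R p N by rewrite wtE invr_gt0 exprn_gt0.
have c0 : 0 <= c by rewrite divr_ge0 ?powR_ge0 // ltW.
have c1 : c < 1 by rewrite /c ltr_pdivrMr // mul1r.
have c2 : c ^+ 2 = p%:R ^+ (N + 2) / (#|B|%:R) ^+ 2.
  rewrite /c expr_div_n expr2 -powRD; last first.
    by apply/implyP => _; rewrite gt_eqF.
  have -> : e + e = (N + 2)%:R by rewrite /e natrD; field.
  by rewrite powR_mulrn // ltW.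
have mA : @mu0 R p N (AA B) = (wt R p N * #|B|%:R)%:E := muA R B.
split.
- exact: mp.
- exact: AA_meas.
- by change (0 < @mu0 R p N (AA B))%E; rewrite mA lte_fin mulr_gt0.
move=> n n0; rewrite [Probability.sort _](_ : _ = @mu0 R p N) // mA -!EFinM; split.
  apply: (le_trans (muI R pr cf n0)); rewrite lee_fin c2 wtE natrX.
  set q := (p%:R : R); set b := (#|B|%:R : R).
  rewrite exprD expr1 [X in X / _ * _]exprD.
  set Q := q ^+ N.
  have Q0 : Q != 0 by rewrite expf_neq0 // gt_eqF.
  rewrite le_eqVlt; apply/orP; left; apply/eqP.
  field; apply/and3P; split => //; rewrite ?gt_eqF //.
rewrite lte_fin gtr_pMl; last by rewrite !mulr_gt0.
by rewrite expr_lt1.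
Qed.
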